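(* Let $\mathbb{G}=(\mathbb{P},E)$ be an amenable rough formal context with $\mathbb{P}=(A,X,I)$, and let $R,S\subseteq A\times X$ be the lax and strict approximations of $I$ (defined below). Then $R;R\subseteq R$ and $S\subseteq S;S$, where $;$ is the composition of relations defined below.
   Context: For any relation $T\subseteq U\times V$ and $U'\subseteq U$, $V'\subseteq V$: $T^{(0)}[V']:=\{u\in U\mid \forall v\in V'\,(uTv)\}$ and $T^{(1)}[U']:=\{v\in V\mid \forall u\in U'\,(uTv)\}$; we write $T^{(0)}[v]$ for $T^{(0)}[\{v\}]$ and $T^{(1)}[u]$ for $T^{(1)}[\{u\}]$. A polarity is $\mathbb{P}=(A,X,I)$ with $I\subseteq A\times X$; for $B\subseteq A$, $Y\subseteq X$ put $B^{\uparrow}:=I^{(1)}[B]$ and $Y^{\downarrow}:=I^{(0)}[Y]$. A set $B\subseteq A$ is Galois-stable if $B=B^{\uparrow\downarrow}$; $Y\subseteq X$ is Galois-stable if $Y=Y^{\downarrow\uparrow}$. A relation $T\subseteq A\times X$ is $I$-compatible if $T^{(0)}[x]$ is Galois-stable for every $x\in X$ and $T^{(1)}[a]$ is Galois-stable for every $a\in A$. An equivalence relation $E$ on $A$ is $I$-compatible if the class $(a)_E:=\{b\in A\mid aEb\}$ is Galois-stable for every $a\in A$. A rough formal context is $\mathbb{G}=(\mathbb{P},E)$ with $E$ an equivalence relation on $A$. Its lax and strict approximations are $R,S\subseteq A\times X$: $aRx$ iff $bIx$ for some $b\in(a)_E$; $aSx$ iff $bIx$ for all $b\in(a)_E$. $\mathbb{G}$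 is amenable if $E$, $R$ and $S$ are all $I$-compatible. For $I$-compatible $R,T\subseteq A\times X$, the composition $R;T\subseteq A\times X$ is defined by: for every $x\in X$, $(R;T)^{(0)}[x]=R^{(0)}[I^{(1)}[T^{(0)}[x]]]$ (i.e. $a\,(R;T)\,x$ iff $a\in R^{(0)}[I^{(1)}[T^{(0)}[x]]]$). *)

(* Defs.v *)
From Stdlib Require Import Relation_Definitions RelationClasses.

Section Defs.
Context {A X : Type}.

Definition rel0 (T : A -> X -> Prop) (V' : X -> Prop) : A -> Prop :=
  fun u => forall v, V' v -> T u v.
Definition rel1 (T : A -> X -> Prop) (U' : A -> Prop) : X -> Prop :=
  fun v => forall u, U' u -> T u v.

Definition up (I : A -> X -> Prop) (B : A -> Prop) : X -> Prop := rel1 I B.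
Definition down (I : A -> X -> Prop) (Y : X -> Prop) : A -> Prop := rel0 I Y.

Definition stableA (I : A -> X -> Prop) (B : A -> Prop) : Prop :=
  forall a, B a <-> down I (up I B) a.
Definition stableX (I : A -> X -> Prop) (Y : X -> Prop) : Prop :=
  forall x, Y x <-> up I (down I Y) x.

Definition I_compatible (I T : A -> X -> Prop) : Prop :=
  (forall x, stableA I (rel0 T (fun y => y = x))) /\
  (forall a, stableX I (rel1 T (fun b => b = a))).

Definition eclass (E : A -> A -> Prop) (a : A) : A -> Prop := fun b => E a b.

Definition E_I_compatible (I : A -> X -> Prop) (E : A -> A -> Prop) : Prop :=
  forall a, stableA I (eclass E a).

Definition laxR (I : A -> X -> Prop) (E : A -> A -> Prop) : A -> X -> Prop :=
  fun a x => exists b, E a b /\ I b x.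
Definition strictS (I : A -> X -> Prop) (E : A -> A -> Prop) : A -> X -> Prop :=
  fun a x => forall b, E a b -> I b x.

Definition amenable (I : A -> X -> Prop) (E : A -> A -> Prop) : Prop :=
  Equivalence E /\ E_I_compatible I E /\
  I_compatible I (laxR I E) /\ I_compatible I (strictS I E).

Definition comp (I R T : A -> X -> Prop) : A -> X -> Prop :=
  fun a x => rel0 R (rel1 I (rel0 T (fun y => y = x))) a.

Definition subrel (R T : A -> X -> Prop) : Prop := forall a x, R a x -> T a x.
End Defs.

(* Main.v *)
Require Import Defs.
From Stdlib Require Import RelationClasses.

Theorem mainTheorem2 (A X : Type) (I : A -> X -> Prop) (E : A -> A -> Prop) :
  amenable I E ->
  subrel (comp I (laxR I E) (laxR I E)) (laxR I E) /\
  subrel (strictS I E) (comp I (strictS I E) (strictS I E)).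
Proof.
  intros [HE [HEc [[HR0 HR1] [HS0 HS1]]]].
  split.
  - intros a x Hc.
    assert (H1 := proj2 (HR1 a x)).
    assert (Hx : laxR I E a x -> laxR I E a x) by auto.
    apply (fun h => H1 h a eq_refl).
    intros u Hu.
    assert (Ha : E a u).
    { apply (proj2 (HEc a u)). intros v Hv.
      apply Hu. intros b Hb; subst b. exists a. split; [reflexivity|].
      apply Hv. unfold eclass. reflexivity. }
    assert (Hux : laxR I E u x).
    { apply (proj2 (HR0 x u)); [|reflexivity].
      intros v Hv. apply Hu. intros b Hb; subst b.
      apply Hc. exact Hv. }
    apply Hu. intros b Hb; subst b.
    destruct Hux as [c [Huc Hc']]. exists c. split; [|exact Hc'].
    transitivity u; assumption.
  - intros a x Hs v Hv.
    intros b Hab. apply Hv. intros y Hy; subst y.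
    intros c Hbc. apply Hs. transitivity b; assumption.
Qed.
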